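(* Let $(A,\to,1)$ be an algebra of type $(2,0)$ satisfying (Re), (M) and (Ex). Then $(A,\to,1)$ satisfies ( ** ) if and only if it satisfies (Tr).
   Context: Properties, required for all $x,y,z\in A$: (Re) $x\to x=1$; (M) $1\to x=x$; (Ex) $x\to(y\to z)=y\to(x\to z)$; ( ** ) $y\to z=1$ implies $(z\to x)\to(y\to x)=1$; (Tr) $x\to y=1$ and $y\to z=1$ imply $x\to z=1$. *)

(* Defs.v *)
Definition prop_Re {A : Type} (imp : A -> A -> A) (one : A) : Prop :=
  forall x : A, imp x x = one.

Definition prop_M {A : Type} (imp : A -> A -> A) (one : A) : Prop :=
  forall x : A, imp one x = x.

Definition prop_Ex {A : Type} (imp : A -> A -> A) : Prop :=
  forall x y z : A, imp x (imp y z) = imp y (imp x z).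

Definition prop_StarStar {A : Type} (imp : A -> A -> A) (one : A) : Prop :=
  forall x y z : A, imp y z = one -> imp (imp z x) (imp y x) = one.

Definition prop_Tr {A : Type} (imp : A -> A -> A) (one : A) : Prop :=
  forall x y z : A, imp x y = one -> imp y z = one -> imp x z = one.

(* Main.v *)
Require Import Defs.

Theorem theorem2p3 (A : Type) (imp : A -> A -> A) (one : A)
  (HRe : prop_Re imp one) (HM : prop_M imp one) (HEx : prop_Ex imp) :
  prop_StarStar imp one <-> prop_Tr imp one.
Proof.
  unfold prop_StarStar, prop_Tr, prop_Re, prop_M, prop_Ex in *.
  split.
  - intros H x y z Hxy Hyz.
    pose proof (H z x y Hxy) as H1. rewrite Hyz, HM in H1. exact H1.
  - intros H x y z Hyz.
    rewrite HEx.
    apply (H y z). exact Hyz.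
    rewrite HEx. apply HRe.
Qed.
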